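(* Let $\Phi(t)$ be a motion of the toy top with Cayley–Klein parameters $\alpha,\beta,\gamma,\delta$, let $c=2s\alpha\beta=\rho e^{i\phi}$ be the trajectory of the tip in polar form (so $\rho=s\sqrt{1-u^2}$), and let $u,w,e_4,w_{\pm1}$ be as in the context. At every time at which $-1<u<1$, $$i\,\phi'(t)=\frac12\,\frac{u^2-e_4^2}{1-e_4^2}\left(\frac{w_{-1}}{u+1}-\frac{w_{+1}}{u-1}\right)\frac{u'}{w}.$$
   Context: $\mathrm{SU}(2)$: complex $2\times2$ matrices $\begin{pmatrix}\alpha&\beta\\ \gamma&\delta\end{pmatrix}$ with $\alpha\delta-\beta\gamma=1$, $\delta=\bar\alpha$, $\gamma=-\bar\beta$; $\mathrm{su}(2)\cong\mathbb{R}^3$ via $(x_1,x_2,x_3)\mapsto\frac12\begin{pmatrix}ix_3&-x_2+ix_1\\ x_2+ix_1&-ix_3\end{pmatrix}$, $[x,y]=xy-yx$, $\langle x,y\rangle=-2\mathrm{Tr}(xy)$, $k=\frac12\mathrm{diag}(i,-i)$. Toy top parameters: $A,C>0$ moments of inertia (perpendicular axis through center of mass, symmetry axis), $s>0$ tip-to-center-of-mass distance, $p>0$ equal to $s$ times mass, gravity $1$. For a curve $\Phi(t)$: $\omega=\Phi'\Phi^{-1}$, $r=\Phi k\Phi^{-1}$, $T=\frac12A\langle\omega,\omega\rangle+\frac12(C-A)\langle\omega,r\rangle^2+\frac12ps\langle[r,k],\omega\rangle^2$, $V=p\langle r,k\rangle$, $m=A\omega+(C-A)\langle\omega,r\rangle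 r+ps\langle[r,k],\omega\rangle[r,k]$, $DL=(C-A)\langle\omega,r\rangle[r,\omega]+ps\langle[r,k],\omega\rangle[r,[k,\omega]]+p[r,k]$. A motion is a solution of $m'=[\omega,m]+DL$, $\Phi'=\omega\Phi$, with first integrals $h=T+V$, $l=\langle m,k\rangle$, $n=\langle m,r\rangle$; $u=\langle r,k\rangle$. Let $e_1\le e_2\le e_3$ be the roots of $\frac1p(1-u^2)(h-\frac{n^2}{2C}-pu)-\frac1{2Ap}(l-nu)^2$, $e_4=\sqrt{1+A/(ps)}$, $R(u)=(u-e_1)(u-e_2)(u-e_3)(u^2-e_4^2)$, $w(t)=-i\sqrt{s/2}(u^2-e_4^2)u'(t)$ (so $w^2=R(u)$), with $u'/w$ meaning $i\sqrt{2/s}/(u^2-e_4^2)$. The constants $w_{\pm1}$ are the square roots of $R(\pm1)$ given by $w_{\pm1}=\sqrt{s/2}\,(1-e_4^2)\,(l\mp n)/A$. The plane of the tip is identified with $\mathbb{C}$ via $(x_1,x_2)\mapsto x_1+ix_2$ (horizontal fixed-frame coordinates), $c$ being the projection of $-s r$; $\phi$ is a continuous choice of argument of $c$ on time intervals where $c\ne0$. *)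

(* Defs.v *)
From Stdlib Require Import Reals.
From Coquelicot Require Import Coquelicot.
Open Scope R_scope.

Record M2 := mkM2 { m11 : C; m12 : C; m21 : C; m22 : C }.

Definition Madd (x y : M2) : M2 :=
  mkM2 (Cplus (m11 x) (m11 y)) (Cplus (m12 x) (m12 y))
       (Cplus (m21 x) (m21 y)) (Cplus (m22 x) (m22 y)).
Definition Mscale (a : R) (x : M2) : M2 :=
  mkM2 (Cmult (RtoC a) (m11 x)) (Cmult (RtoC a) (m12 x))
       (Cmult (RtoC a) (m21 x)) (Cmult (RtoC a) (m22 x)).
Definition Mmul (x y : M2) : M2 :=
  mkM2 (Cplus (Cmult (m11 x) (m11 y)) (Cmult (m12 x) (m21 y)))
       (Cplus (Cmult (m11 x) (m12 y)) (Cmult (m12 x) (m22 y)))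
       (Cplus (Cmult (m21 x) (m11 y)) (Cmult (m22 x) (m21 y)))
       (Cplus (Cmult (m21 x) (m12 y)) (Cmult (m22 x) (m22 y))).
Definition Mdet (x : M2) : C :=
  Cminus (Cmult (m11 x) (m22 x)) (Cmult (m12 x) (m21 x)).
Definition Minv (x : M2) : M2 :=
  let d := Cinv (Mdet x) in
  mkM2 (Cmult d (m22 x)) (Cmult d (Copp (m12 x)))
       (Cmult d (Copp (m21 x))) (Cmult d (m11 x)).
Definition Mtr (x : M2) : C := Cplus (m11 x) (m22 x).

(** SU(2): alpha delta - beta gamma = 1, delta = conj alpha, gamma = - conj beta. *)
Definition inSU2 (x : M2) : Prop :=
  Mdet x = RtoC 1 /\ m22 x = Cconj (m11 x) /\ m21 x = Copp (Cconj (m12 x)).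

Definition su2_of (x1 x2 x3 : R) : M2 :=
  Mscale (1/2) (mkM2 (Cmult Ci (RtoC x3)) (Cplus (RtoC (- x2)) (Cmult Ci (RtoC x1)))
                     (Cplus (RtoC x2) (Cmult Ci (RtoC x1))) (Cmult Ci (RtoC (- x3)))).

(** Lie bracket and inner product <x,y> = -2 Tr(xy) (real on su(2); we take
    the real part, which is the whole value for elements of su(2)). *)
Definition Mbr (x y : M2) : M2 := Madd (Mmul x y) (Mscale (-1) (Mmul y x)).
Definition Minner (x y : M2) : R := Re (Cmult (RtoC (-2)) (Mtr (Mmul x y))).

Definition kk : M2 := su2_of 0 0 1.

Definition Cex_derive (f : R -> C) (t : R) : Prop :=
  ex_derive (fun s => Re (f s)) t /\ ex_derive (fun s => Im (f s)) t.
Definition CDerive (f : R -> C) (t : R) : C :=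
  (Derive (fun s => Re (f s)) t, Derive (fun s => Im (f s)) t).
Definition Mex_derive (F : R -> M2) (t : R) : Prop :=
  Cex_derive (fun s => m11 (F s)) t /\ Cex_derive (fun s => m12 (F s)) t /\
  Cex_derive (fun s => m21 (F s)) t /\ Cex_derive (fun s => m22 (F s)) t.
Definition MDerive (F : R -> M2) (t : R) : M2 :=
  mkM2 (CDerive (fun s => m11 (F s)) t) (CDerive (fun s => m12 (F s)) t)
       (CDerive (fun s => m21 (F s)) t) (CDerive (fun s => m22 (F s)) t).

(** Quantities attached to a curve Phi.  IA, IC = moments of inertia A, C;
    s = tip-to-centre-of-mass distance; p = s * mass; gravity 1. *)
Definition omega (Phi : R -> M2) (t : R) : M2 := Mmul (MDerive Phi t) (Minv (Phi t)).
Definition rr (Phi : R -> M2) (t : R) : M2 := Mmul (Phi t) (Mmul kk (Minv (Phi t))).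

Definition mom (IA IC s p : R) (Phi : R -> M2) (t : R) : M2 :=
  let w := omega Phi t in let r := rr Phi t in
  Madd (Mscale IA w)
   (Madd (Mscale ((IC - IA) * Minner w r) r)
         (Mscale (p * s * Minner (Mbr r kk) w) (Mbr r kk))).

Definition DL (IA IC s p : R) (Phi : R -> M2) (t : R) : M2 :=
  let w := omega Phi t in let r := rr Phi t in
  Madd (Mscale ((IC - IA) * Minner w r) (Mbr r w))
   (Madd (Mscale (p * s * Minner (Mbr r kk) w) (Mbr r (Mbr kk w)))
         (Mscale p (Mbr r kk))).

Definition is_motion (IA IC s p : R) (a b : R) (Phi : R -> M2) : Prop :=
  forall t, a < t < b ->
    inSU2 (Phi t) /\ Mex_derive Phi t /\
    Mex_derive (mom IA IC s p Phi) t /\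
    MDerive (mom IA IC s p Phi) t =
      Madd (Mbr (omega Phi t) (mom IA IC s p Phi t)) (DL IA IC s p Phi t).

Definition l_int (IA IC s p : R) (Phi : R -> M2) (t : R) : R :=
  Minner (mom IA IC s p Phi t) kk.
Definition n_int (IA IC s p : R) (Phi : R -> M2) (t : R) : R :=
  Minner (mom IA IC s p Phi t) (rr Phi t).
Definition uu (Phi : R -> M2) (t : R) : R := Minner (rr Phi t) kk.

Definition e4 (IA s p : R) : R := sqrt (1 + IA / (p * s)).
Definition w_plus1 (IA s l n e : R) : R := sqrt (s / 2) * (1 - e ^ 2) * (l - n) / IA.
Definition w_minus1 (IA s l n e : R) : R := sqrt (s / 2) * (1 - e ^ 2) * (l + n) / IA.

Definition tip (s : R) (Phi : R -> M2) (t : R) : C :=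
  Cmult (RtoC (2 * s)) (Cmult (m11 (Phi t)) (m12 (Phi t))).
Definition rho (s : R) (Phi : R -> M2) (t : R) : R := s * sqrt (1 - (uu Phi t) ^ 2).
Definition expi (x : R) : C := (cos x, sin x).

(* Main.v *)
Require Import Defs.
From Stdlib Require Import Reals.
From Coquelicot Require Import Coquelicot.
From Stdlib Require Import Lra Nsatz.
Open Scope R_scope.


Ltac dm x := let a := fresh "a" in let b := fresh "b" in let c := fresh "c" in let d := fresh "d" in
  let a1 := fresh "a" in let b1 := fresh "b" in let c1 := fresh "c" in let d1 := fresh "d" in
  destruct x as [[a a1] [b b1] [c c1] [d d1]].

Lemma Minner_add_l x y z : Minner (Madd x y) z = Minner x z + Minner y z.
Proof. dm x; dm y; dm z; unfold Minner, Mtr, Mmul, Madd; simpl; ring. Qed.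
Lemma Minner_scale_l a x z : Minner (Mscale a x) z = a * Minner x z.
Proof. dm x; dm z; unfold Minner, Mtr, Mmul, Mscale; simpl; ring. Qed.
Lemma Minner_brk_k r : Minner (Mbr r kk) kk = 0.
Proof. dm r; unfold Minner, Mtr, Mmul, Mbr, Madd, Mscale, kk, su2_of; simpl; ring. Qed.
Lemma Minner_brk_r r : Minner (Mbr r kk) r = 0.
Proof. dm r; unfold Minner, Mtr, Mmul, Mbr, Madd, Mscale, kk, su2_of; simpl; ring. Qed.

Lemma lnu w r A C s p : Minner r r = 1 ->
  let m := Madd (Mscale A w)
   (Madd (Mscale ((C - A) * Minner w r) r)
         (Mscale (p * s * Minner (Mbr r kk) w) (Mbr r kk))) in
  Minner m kk - Minner m r * Minner r kk = A * (Minner w kk - Minner r kk * Minner w r).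
Proof.
  intros Hrr m; unfold m.
  rewrite !Minner_add_l, !Minner_scale_l, Minner_brk_k, Minner_brk_r, Hrr. ring.
Qed.

Lemma Minv_det1 x : Mdet x = RtoC 1 -> Minv x = mkM2 (m22 x) (Copp (m12 x)) (Copp (m21 x)) (m11 x).
Proof.
  intros H; unfold Minv; rewrite H.
  replace (Cinv (RtoC 1)) with (RtoC 1).
  2:{ unfold Cinv, RtoC; simpl; f_equal; field. }
  f_equal; apply Cmult_1_l.
Qed.


Definition PP x1 y1 x2 y2 := mkM2 (x1,y1) (x2,y2) (-x2,y2) (x1,-y1).
Definition PPi x1 y1 x2 y2 := mkM2 (x1,-y1) (-x2,-y2) (x2,-y2) (x1,y1).

Lemma alg_u x1 y1 x2 y2 : Minner (Mmul (PP x1 y1 x2 y2) (Mmul kk (PPi x1 y1 x2 y2))) kk = x1^2+y1^2 - x2^2 - y2^2.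
Proof. unfold PP, PPi, Minner, Mtr, Mmul, kk, su2_of, Mscale; simpl. field. Qed.
Lemma alg_rr x1 y1 x2 y2 : x1^2+y1^2+x2^2+y2^2 = 1 ->
  let r := Mmul (PP x1 y1 x2 y2) (Mmul kk (PPi x1 y1 x2 y2)) in Minner r r = 1.
Proof. intros Hc r. unfold r, PP, PPi, Minner, Mtr, Mmul, kk, su2_of, Mscale; simpl.
  transitivity ((x1^2+y1^2+x2^2+y2^2)^2); [field| rewrite Hc; ring]. Qed.
Lemma alg_w x1 y1 x2 y2 d1 e1 d2 e2 : x1^2+y1^2+x2^2+y2^2 = 1 ->
  let r := Mmul (PP x1 y1 x2 y2) (Mmul kk (PPi x1 y1 x2 y2)) in
  let w := Mmul (PP d1 e1 d2 e2) (PPi x1 y1 x2 y2) in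
  Minner w kk - Minner r kk * Minner w r =
  4 * ((x2^2+y2^2)*(x1*e1 - y1*d1) + (x1^2+y1^2)*(x2*e2-y2*d2)).
Proof. intros Hc r w.
  transitivity (2*((x1*e1 - y1*d1)+(x2*e2-y2*d2))*(1-((x1^2+y1^2)-(x2^2+y2^2))^2) + 4*((x1^2+y1^2)-(x2^2+y2^2))*((x1^2+y1^2)*(x2*e2-y2*d2) - (x2^2+y2^2)*(x1*e1 - y1*d1))).
  - unfold w, r, PP, PPi, Minner, Mtr, Mmul, kk, su2_of, Mscale; simpl. field.
  - set (a := x1*e1 - y1*d1); set (b := x2*e2-y2*d2); set (P := x1^2+y1^2); set (Q := x2^2+y2^2).
    assert (HS : P + Q = 1) by (unfold P, Q; lra). clearbody a b P Q. replace Q with (1-P) by lra. ring.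
Qed.


Lemma locally_interval (t t0 t1 : R) : t0 < t < t1 -> locally t (fun x => t0 < x < t1).
Proof.
  intros [H0 H1].
  assert (Hp : 0 < Rmin (t - t0) (t1 - t)) by (apply Rmin_pos; lra).
  exists (mkposreal _ Hp). intros y Hy.
  change (Rabs (y - t) < Rmin (t - t0) (t1 - t)) in Hy.
  apply Rabs_def2 in Hy. destruct Hy as [Hy1 Hy2].
  pose proof (Rmin_l (t - t0) (t1 - t)). pose proof (Rmin_r (t - t0) (t1 - t)). lra.
Qed.

Lemma final_eq rho c0 s0 dci dcr : 0 < rho -> s0^2+c0^2 = 1 ->
  0 + ((c0*dci - s0*dcr)*rho - 0*(c0*dcr+s0*dci))/(rho*(rho*1)) * /(1+0/rho*(0/rho)) =
  (dci*(rho*c0) - dcr*(rho*s0))/(rho*c0*(rho*c0*1)+rho*s0*(rho*s0*1)).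
Proof.
  intros Hr Hs.
  replace (rho*c0*(rho*c0*1)+rho*s0*(rho*s0*1)) with (rho*rho)
    by (transitivity (rho * rho * (s0^2 + c0^2)); [rewrite Hs; ring | ring]).
  field. lra.
Qed.

Lemma arg_deriv (cr ci rho phi : R -> R) (t t0 t1 dcr dci : R) :
  t0 < t < t1 -> is_derive cr t dcr -> is_derive ci t dci ->
  (forall x, t0 < x < t1 -> cr x = rho x * cos (phi x) /\ ci x = rho x * sin (phi x)) ->
  (forall x, t0 < x < t1 -> 0 < rho x) -> continuous phi t ->
  is_derive phi t ((dci * cr t - dcr * ci t) / (cr t ^ 2 + ci t ^ 2)).
Proof.
  intros Ht Hcr Hci Hpol Hrho Hcont.
  set (c0 := cos (phi t)); set (s0 := sin (phi t)).
  set (g := fun x => c0 * ci x - s0 * cr x).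
  set (h := fun x => c0 * cr x + s0 * ci x).
  assert (Hg : is_derive g t (c0 * dci - s0 * dcr)).
  { apply (is_derive_minus (fun x => c0 * ci x) (fun x => s0 * cr x));
      apply is_derive_scal; assumption. }
  assert (Hh : is_derive h t (c0 * dcr + s0 * dci)).
  { apply (is_derive_plus (fun x => c0 * cr x) (fun x => s0 * ci x));
      apply is_derive_scal; assumption. }
  destruct (Hpol t Ht) as [Hct Hst].
  pose proof (Hrho t Ht) as Hrt.
  assert (Hsc : s0 ^ 2 + c0 ^ 2 = 1) by (unfold s0, c0; rewrite <- (sin2_cos2 (phi t)); unfold Rsqr; ring).
  assert (Hgt : g t = 0) by (unfold g; rewrite Hct, Hst; fold c0 s0; ring).
  assert (Hht : h t = rho t) by (unfold h; rewrite Hct, Hst; fold c0 s0;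
     transitivity (rho t * (s0^2 + c0^2)); [ring| rewrite Hsc; ring]).
  assert (Hdiv : is_derive (fun x => g x / h x) t
     (((c0 * dci - s0 * dcr) * h t - g t * (c0 * dcr + s0 * dci)) / h t ^ 2)).
  { apply (is_derive_div g h); auto. rewrite Hht; lra. }
  assert (Hat : is_derive (fun x => atan (g x / h x)) t
     (scal (((c0 * dci - s0 * dcr) * h t - g t * (c0 * dcr + s0 * dci)) / h t ^ 2)
           (/ (1 + (g t / h t)²)))).
  { apply (is_derive_comp atan (fun x => g x / h x)); [apply is_derive_atan | exact Hdiv]. }
  pose proof (is_derive_plus (fun _ : R => phi t) _ t _ _ (is_derive_const (phi t) t) Hat) as Hfull.
  assert (Hloc : locally t (fun x => plus (phi t) (atan (g x / h x)) = phi x)).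
  { assert (Hpi : 0 < PI / 2) by exact PI2_RGT_0.
    pose proof (Hcont _ (locally_ball (phi t) (mkposreal _ Hpi))) as Hb.
    simpl in Hb.
    generalize (filter_and _ _ (locally_interval t t0 t1 Ht) Hb).
    apply filter_imp. intros x [Hx Hbx].
    change (Rabs (phi x - phi t) < PI / 2) in Hbx.
    apply Rabs_def2 in Hbx.
    destruct (Hpol x Hx) as [Hcx Hsx]. pose proof (Hrho x Hx) as Hrx.
    set (d := phi x - phi t).
    assert (Hcd : 0 < cos d) by (apply cos_gt_0; unfold d; lra).
    assert (Hgx : g x = rho x * sin d) by (unfold g, d; rewrite sin_minus, Hcx, Hsx; fold c0 s0; ring).
    assert (Hhx : h x = rho x * cos d) by (unfold h, d; rewrite cos_minus, Hcx, Hsx; fold c0 s0; ring).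
    assert (Htan : g x / h x = tan d) by (rewrite Hgx, Hhx; unfold tan; field; lra).
    rewrite Htan, atan_tan by (unfold d; lra).
    unfold plus; simpl. unfold d; ring. }
  pose proof (is_derive_ext_loc _ _ _ _ Hloc Hfull) as Hd.
  match type of Hd with is_derive _ _ ?L => replace ((dci * cr t - dcr * ci t) / (cr t ^ 2 + ci t ^ 2)) with L; [exact Hd|] end.
  rewrite Hgt, Hht, Hct, Hst. unfold plus, zero, scal; simpl. unfold mult; simpl. unfold Rsqr.
  exact (final_eq (rho t) c0 s0 dci dcr Hrt Hsc).
Qed.

Lemma deriv_bil (f1 g1 f2 g2 : R -> R) (t a b c d k : R) (sg : R) : is_derive f1 t a -> is_derive g1 t b -> is_derive f2 t c -> is_derive g2 t d ->
 is_derive (fun x => k * (f1 x * f2 x + sg * (g1 x * g2 x))) t (k*(a*f2 t + f1 t * c + sg * (b * g2 t + g1 t * d))).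
Proof.
  intros H1 H2 H3 H4.
  pose proof (is_derive_unique _ _ _ H1). pose proof (is_derive_unique _ _ _ H2).
  pose proof (is_derive_unique _ _ _ H3). pose proof (is_derive_unique _ _ _ H4).
  auto_derive.
  - repeat split; eexists; eassumption.
  - change (fun x:R => f1 x) with f1; change (fun x:R => f2 x) with f2;
    change (fun x:R => g1 x) with g1; change (fun x:R => g2 x) with g2.
    rewrite H, H0, H5, H6. ring.
Qed.

Lemma SU_form X : inSU2 X -> X = PP (Re (m11 X)) (Im (m11 X)) (Re (m12 X)) (Im (m12 X)).
Proof.
  intros [_ [H22 H21]]; destruct X as [[a a'] [b b'] c d]; simpl in *; subst.
  unfold PP, Cconj, Copp, Re, Im; simpl; f_equal; f_equal; ring.
Qed.

Lemma Minv_SU X : inSU2 X -> Minv X = PPi (Re (m11 X)) (Im (m11 X)) (Re (m12 X)) (Im (m12 X)).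
Proof.
  intros HS. rewrite Minv_det1 by apply HS. destruct HS as [_ [H22 H21]].
  destruct X as [[a a'] [b b'] c d]; simpl in *; subst.
  unfold PPi, Cconj, Copp, Re, Im; simpl; f_equal; f_equal; ring.
Qed.

Lemma SU_norm X : inSU2 X -> Re (m11 X)^2 + Im (m11 X)^2 + Re (m12 X)^2 + Im (m12 X)^2 = 1.
Proof.
  intros HS. pose proof (SU_form X HS) as E. destruct HS as [Hd _].
  rewrite E in Hd. apply (f_equal fst) in Hd. unfold Mdet, PP in Hd; simpl in Hd.
  rewrite <- Hd. ring.
Qed.

Theorem mainTheorem5 (IA IC s p a b : R) (Phi : R -> M2) (phi : R -> R) (t0 t1 t : R) :
  0 < IA -> 0 < IC -> 0 < s -> 0 < p ->
  is_motion IA IC s p a b Phi ->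
  (* phi is a continuous choice of argument of c = rho e^{i phi} on a time
     interval (t0,t1) inside (a,b) on which c <> 0 *)
  a <= t0 -> t1 <= b ->
  (forall x, t0 < x < t1 -> tip s Phi x <> RtoC 0) ->
  (forall x, t0 < x < t1 -> continuous phi x) ->
  (forall x, t0 < x < t1 -> tip s Phi x = Cmult (RtoC (rho s Phi x)) (expi (phi x))) ->
  t0 < t < t1 ->
  -1 < uu Phi t < 1 ->
  let u := uu Phi t in
  let e := e4 IA s p in
  let l := l_int IA IC s p Phi t in
  let n := n_int IA IC s p Phi t in
  (* u'/w, meaning i sqrt(2/s) / (u^2 - e4^2) *)
  let u'_over_w := Cmult Ci (RtoC (sqrt (2 / s) / (u ^ 2 - e ^ 2))) in
  ex_derive phi t /\
  Cmult Ci (RtoC (Derive phi t)) =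
    Cmult (RtoC (1 / 2 * ((u ^ 2 - e ^ 2) / (1 - e ^ 2)) *
                 (w_minus1 IA s l n e / (u + 1) - w_plus1 IA s l n e / (u - 1))))
          u'_over_w.
Proof.
  intros HA HC Hs Hp Hmot Ha0 Hb1 Hnz Hcont Hpol Ht Hu u e l n u'_over_w.
  assert (Hab : forall x, t0 < x < t1 -> a < x < b) by (intros; lra).
  destruct (Hmot t (Hab t Ht)) as [HSU [HdPhi _]].
  destruct HdPhi as [[D11r D11i] [[D12r D12i] _]].
  cbv beta in D11r, D11i, D12r, D12i.
  assert (Lloc : locally t (fun x => inSU2 (Phi x))).
  { generalize (locally_interval t t0 t1 Ht). apply filter_imp.
    intros x Hx. exact (proj1 (Hmot x (Hab x Hx))). }
  assert (E21r : Derive (fun x => Re (m21 (Phi x))) t = - Derive (fun x => Re (m12 (Phi x))) t).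
  { rewrite <- Derive_opp. apply Derive_ext_loc. revert Lloc; apply filter_imp.
    intros x [_ [_ H]]. rewrite H. unfold Re, Copp, Cconj; simpl. reflexivity. }
  assert (E21i : Derive (fun x => Im (m21 (Phi x))) t = Derive (fun x => Im (m12 (Phi x))) t).
  { apply Derive_ext_loc. revert Lloc; apply filter_imp.
    intros x [_ [_ H]]. rewrite H. unfold Im, Copp, Cconj; simpl. ring. }
  assert (E22r : Derive (fun x => Re (m22 (Phi x))) t = Derive (fun x => Re (m11 (Phi x))) t).
  { apply Derive_ext_loc. revert Lloc; apply filter_imp.
    intros x [_ [H _]]. rewrite H. unfold Re, Cconj; simpl. reflexivity. }
  assert (E22i : Derive (fun x => Im (m22 (Phi x))) t = - Derive (fun x => Im (m11 (Phi x))) t).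
  { rewrite <- Derive_opp. apply Derive_ext_loc. revert Lloc; apply filter_imp.
    intros x [_ [H _]]. rewrite H. unfold Im, Cconj; simpl. reflexivity. }
  pose proof (SU_form _ HSU) as eqPhi.
  pose proof (Minv_SU _ HSU) as Hinv.
  pose proof (SU_norm _ HSU) as Hc.
  set (x1 := Re (m11 (Phi t))) in *. set (y1 := Im (m11 (Phi t))) in *.
  set (x2 := Re (m12 (Phi t))) in *. set (y2 := Im (m12 (Phi t))) in *.
  set (d1 := Derive (fun x => Re (m11 (Phi x))) t) in *.
  set (e1 := Derive (fun x => Im (m11 (Phi x))) t) in *.
  set (d2 := Derive (fun x => Re (m12 (Phi x))) t) in *.
  set (e2 := Derive (fun x => Im (m12 (Phi x))) t) in *.
  assert (eqD : MDerive Phi t = PP d1 e1 d2 e2).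
  { unfold MDerive, CDerive, PP. cbv beta. rewrite E21r, E21i, E22r, E22i. reflexivity. }
  assert (Hrr_eq : rr Phi t = Mmul (PP x1 y1 x2 y2) (Mmul kk (PPi x1 y1 x2 y2))).
  { unfold rr. rewrite Hinv. rewrite eqPhi at 1. reflexivity. }
  assert (Homega : omega Phi t = Mmul (PP d1 e1 d2 e2) (PPi x1 y1 x2 y2)).
  { unfold omega. rewrite Hinv, eqD. reflexivity. }
  assert (Hrr1 : Minner (rr Phi t) (rr Phi t) = 1).
  { rewrite Hrr_eq. apply alg_rr. exact Hc. }
  set (P := x1^2+y1^2). set (Q := x2^2+y2^2).
  assert (HPQ : P + Q = 1) by (unfold P, Q; lra).
  assert (Hu_eq : u = P - Q).
  { unfold u, uu. rewrite Hrr_eq. rewrite alg_u. unfold P, Q; ring. }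
  assert (Hw : Minner (omega Phi t) kk - Minner (rr Phi t) kk * Minner (omega Phi t) (rr Phi t) =
     4 * (Q*(x1*e1 - y1*d1) + P*(x2*e2-y2*d2))).
  { pose proof (alg_w x1 y1 x2 y2 d1 e1 d2 e2 Hc) as W. cbv zeta in W.
    rewrite Hrr_eq, Homega. exact W. }
  assert (Hln : l - n * u = IA * (4 * (Q*(x1*e1 - y1*d1) + P*(x2*e2-y2*d2)))).
  { pose proof (lnu (omega Phi t) (rr Phi t) IA IC s p Hrr1) as L. cbv zeta in L.
    unfold l, n, u, l_int, n_int, uu, mom. cbv zeta. rewrite L, Hw. reflexivity. }
  set (cr := fun x => Re (tip s Phi x)).
  set (ci := fun x => Im (tip s Phi x)).
  assert (Hcr : is_derive cr t (2*s*(d1*x2 + x1*d2 + (-1)*(e1*y2 + y1*e2)))).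
  { eapply is_derive_ext; [| apply (deriv_bil (fun x => Re (m11 (Phi x))) (fun x => Im (m11 (Phi x)))
        (fun x => Re (m12 (Phi x))) (fun x => Im (m12 (Phi x))) t d1 e1 d2 e2 (2*s) (-1));
        apply Derive_correct; assumption].
    intros x. unfold cr, tip, Re, Im; simpl. ring. }
  assert (Hci : is_derive ci t (2*s*(d1*y2 + x1*e2 + 1*(e1*x2 + y1*d2)))).
  { eapply is_derive_ext; [| apply (deriv_bil (fun x => Re (m11 (Phi x))) (fun x => Im (m11 (Phi x)))
        (fun x => Im (m12 (Phi x))) (fun x => Re (m12 (Phi x))) t d1 e1 e2 d2 (2*s) 1);
        apply Derive_correct; assumption].
    intros x. unfold ci, tip, Re, Im; simpl. ring. }
  assert (Hpol' : forall x, t0 < x < t1 -> cr x = rho s Phi x * cos (phi x) /\ ci x = rho s Phi x * sin (phi x)).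
  { intros x Hx. unfold cr, ci. rewrite (Hpol x Hx). unfold expi, RtoC, Re, Im; simpl. split; ring. }
  assert (Hrho : forall x, t0 < x < t1 -> 0 < rho s Phi x).
  { intros x Hx. assert (H0 : 0 <= rho s Phi x).
    { unfold rho. apply Rmult_le_pos; [lra | apply sqrt_pos]. }
    destruct H0 as [H0|H0]; [exact H0|].
    exfalso. apply (Hnz x Hx). rewrite (Hpol x Hx), <- H0.
    unfold Cmult, RtoC, expi; simpl. f_equal; ring. }
  pose proof (arg_deriv cr ci (rho s Phi) phi t t0 t1 _ _ Ht Hcr Hci Hpol' Hrho (Hcont t Ht)) as Hd.
  split; [eexists; exact Hd|].
  rewrite (is_derive_unique _ _ _ Hd).
  assert (Hcrt : cr t = 2*s*(x1*x2 - y1*y2)) by (unfold cr, tip, x1, y1, x2, y2, Re, Im; simpl; ring).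
  assert (Hcit : ci t = 2*s*(x1*y2 + y1*x2)) by (unfold ci, tip, x1, y1, x2, y2, Re, Im; simpl; ring).
  rewrite Hcrt, Hcit.
  assert (Hu' : -1 < P - Q < 1) by (rewrite <- Hu_eq; exact Hu).
  assert (HP : 0 < P) by lra. assert (HQ : 0 < Q) by lra.
  assert (He2 : e ^ 2 = 1 + IA / (p * s)).
  { unfold e, e4. rewrite <- Rsqr_pow2, Rsqr_sqrt; [reflexivity|].
    assert (0 < IA / (p*s)) by (apply Rdiv_lt_0_compat; [lra| apply Rmult_lt_0_compat; lra]). lra. }
  assert (HIps : 0 < IA / (p * s)) by (apply Rdiv_lt_0_compat; [lra| apply Rmult_lt_0_compat; lra]).
  assert (Hu2 : u ^ 2 < 1) by (rewrite Hu_eq; nra).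
  set (q := sqrt (s / 2)).
  assert (Hq : 0 < q) by (apply sqrt_lt_R0; lra).
  assert (Hq' : sqrt (2 / s) = / q).
  { assert (Hm : q * sqrt (2 / s) = 1).
    { unfold q. rewrite <- sqrt_mult by (apply Rlt_le, Rdiv_lt_0_compat; lra).
      replace (s / 2 * (2 / s)) with 1 by (field; lra). apply sqrt_1. }
    apply (Rmult_eq_reg_l q); [rewrite Hm; field; lra | lra]. }
  set (D := (2 * s * (d1 * y2 + x1 * e2 + 1 * (e1 * x2 + y1 * d2)) * (2 * s * (x1 * x2 - y1 * y2)) -
     2 * s * (d1 * x2 + x1 * d2 + -1 * (e1 * y2 + y1 * e2)) * (2 * s * (x1 * y2 + y1 * x2))) /
    ((2 * s * (x1 * x2 - y1 * y2)) ^ 2 + (2 * s * (x1 * y2 + y1 * x2)) ^ 2)).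
  assert (Key : D = 1 / 2 * ((u ^ 2 - e ^ 2) / (1 - e ^ 2)) *
                 (w_minus1 IA s l n e / (u + 1) - w_plus1 IA s l n e / (u - 1)) *
                 (sqrt (2 / s) / (u ^ 2 - e ^ 2))).
  { unfold w_minus1, w_plus1. fold q. rewrite Hq'.
    transitivity ((l - n * u) / (IA * (1 - u ^ 2))).
    2:{ field. repeat split; try lra; nra. }
    rewrite Hln, Hu_eq.
    replace (1 - (P - Q) ^ 2) with (4 * P * Q) by (replace Q with (1 - P) by lra; ring).
    unfold D.
    replace ((2 * s * (x1 * x2 - y1 * y2)) ^ 2 + (2 * s * (x1 * y2 + y1 * x2)) ^ 2)
      with (4 * s ^ 2 * P * Q) by (unfold P, Q; ring).
    match goal with |- ?N / _ = _ => replace N with (4 * s ^ 2 * (Q * (x1 * e1 - y1 * d1) + P * (x2 * e2 - y2 * d2))) by (unfold P, Q; ring) end.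
    field. repeat split; lra. }
  rewrite Key. unfold u'_over_w, Cmult, Ci, RtoC; simpl. f_equal; ring.
Qed.
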